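(* Let $n=n(\theta)$ be positive integers with $n\to\infty$ and $\theta/n\to c\in(0,\infty)$ as $\theta\to\infty$. Let $K_n(\theta)$ be a random variable with $P\{K_n(\theta)=k\}=|S_n^k|\theta^k/\theta_{(n)}$, $k=1,\dots,n$, where $\theta_{(n)}=\theta(\theta+1)\cdots(\theta+n-1)$ and $|S_n^k|$ is the coefficient of $\theta^k$ in $\theta_{(n)}$. Then, as $\theta\to\infty$, the family of laws of $K_n(\theta)/n$ satisfies an LDP on $[0,1]$ with speed $\theta$ and rate function $$I(x)=\sup_{t\in\mathbb R}\{tx-\Lambda_3(t)\},$$ where $\Lambda_3(t)=\frac1c\{[c\log c-(1+c)\log(1+c)]+[(1+ce^{ct})\log(1+ce^{ct})-ce^{ct}\log(ce^{ct})]\}$.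
   Context: $K_n(\theta)$ is the number of distinct alleles in a sample of size $n$ from a $PD(\theta)$ population. An LDP with speed $\theta$ uses normalization $\theta^{-1}\log$ as $\theta\to\infty$. *)

(* Defs.v *)
From HB Require Import structures.
From mathcomp Require Import all_boot all_order all_algebra.
From mathcomp Require Import all_classical all_reals.
From mathcomp Require Import ereal topology normedtype sequences exp measure lebesgue_measure.
Set Implicit Arguments. Unset Strict Implicit. Unset Printing Implicit Defensive.
Import Order.TTheory GRing.Theory Num.Theory.
Import numFieldNormedType.Exports.
Local Open Scope classical_set_scope.
Local Open Scope ring_scope.

Section Defs.
Variable R : realType.

Definition unit01 : set R := `[(0:R), 1]%classic.

Definition rising (theta : R) (n : nat) : R := \prod_(i < n) (theta + i%:R).

Definition stirling1 (n k : nat) : R :=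
  (\prod_(i < n) ('X + (i%:R)%:P) : {poly R})`_k.

Definition Kn_law (theta : R) (n : nat) (A : set R) : R :=
  \sum_(1 <= k < n.+1)
     (if `[< A (k%:R / n%:R) >] then stirling1 n k * theta ^+ k / rising theta n
      else 0).

Definition scaled_log (theta p : R) : \bar R :=
  if p == 0 then -oo%E else (theta^-1 * ln p)%:E.

Definition rel_interior01 (A : set R) : set R :=
  [set x | A x /\ exists2 e : R, 0 < e &
             forall y, unit01 y -> `|y - x| < e -> A y].

(* Closure relative to the closed set [0,1]
   coincides with the closure in R. *)
Definition LDP01 (mu : R -> set R -> R) (I : R -> \bar R) : Prop :=
  [/\ (forall x, unit01 x -> (0 <= I x)%E),
      (forall a : R, closed [set x | unit01 x /\ (I x <= a%:E)%E]),
      (forall F : set R, measurable F -> F `<=` unit01 ->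
         (limf_esup (fun theta => scaled_log theta (mu theta F)) (pinfty_nbhs R)
           <= - ereal_inf (I @` closure F))%E)
    & (forall G : set R, measurable G -> G `<=` unit01 ->
         (- ereal_inf (I @` rel_interior01 G)
           <= limf_einf (fun theta => scaled_log theta (mu theta G)) (pinfty_nbhs R))%E)].

Definition Lambda3 (c t : R) : R :=
  c^-1 * ((c * ln c - (1 + c) * ln (1 + c))
          + ((1 + c * expR (c * t)) * ln (1 + c * expR (c * t))
             - c * expR (c * t) * ln (c * expR (c * t)))).

Definition rate3 (c x : R) : \bar R :=
  ereal_sup [set (t * x - Lambda3 c t)%:E | t in [set: R]].

End Defs.

(* Main.v *)
Require Import Defs.
From HB Require Import structures.
From mathcomp Require Import all_boot all_order all_algebra.
From mathcomp Require Import all_classical all_reals.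
From mathcomp Require Import ereal topology normedtype sequences exp measure lebesgue_measure.
Import Order.TTheory GRing.Theory Num.Theory.
Import numFieldNormedType.Exports.
Local Open Scope classical_set_scope.
Local Open Scope ring_scope.
From mathcomp Require Import ring lra.
Set Implicit Arguments. Unset Strict Implicit. Unset Printing Implicit Defensive.
Section Comb.
Variable R : realType.

Definition Pn (n : nat) : {poly R} := \prod_(i < n) ('X + (i%:R)%:P).

Lemma Pn_rec n : Pn n.+1 = Pn n * ('X + (n%:R)%:P).
Proof. by rewrite /Pn big_ord_recr. Qed.

Lemma stirling1_ge0 n k : 0 <= stirling1 R n k.
Proof.
rewrite /stirling1 -/(Pn n).
elim: n k => [|n IH] k.
  by rewrite /Pn big_ord0 coef1; case: (k == 0%N).
rewrite Pn_rec mulrDr coefD coefMX coefMC.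
apply: addr_ge0; last by apply: mulr_ge0.
by case: k => [|k] //=; apply: IH.
Qed.

Lemma stirling1_0 n : (0 < n)%N -> stirling1 R n 0 = 0.
Proof.
rewrite /stirling1 -/(Pn n).
case: n => // n _; elim: n => [|n IH].
  by rewrite Pn_rec /Pn big_ord0 mul1r coefD coefX coefC /= add0r.
by rewrite Pn_rec mulrDr coefD coefMX coefMC IH mul0r addr0.
Qed.

Lemma size_Pn n : (size (Pn n) <= n.+1)%N.
Proof.
elim: n => [|n IH]; first by rewrite /Pn big_ord0 size_poly1.
rewrite Pn_rec; apply: (leq_trans (size_polyMleq _ _)).
have h : (size (('X + (n%:R)%:P)%R : {poly R}) <= 2)%N.
  by apply: (leq_trans (size_polyD _ _)); rewrite size_polyX geq_max leqnn (leq_trans (size_polyC_leq1 _)).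
rewrite -subn1; apply: leq_trans (leq_sub2r _ (leq_add IH h)) _.
by rewrite addnS addn1 subn1 /=.
Qed.

Lemma sum_stirling n x :
  \sum_(k < n.+1) stirling1 R n k * x ^+ k = rising x n.
Proof.
rewrite /stirling1 -/(Pn n) -horner_coef_wide ?size_Pn //.
rewrite /Pn horner_prod /rising; apply: eq_bigr => i _.
by rewrite hornerD hornerX hornerC.
Qed.

End Comb.
Section Anal.
Variable R : realType.
Implicit Types (a x : R) (n : nat).

Lemma ln_div x y : 0 < x -> 0 < y -> ln (x / y) = ln x - ln y :> R.
Proof.
move=> hx hy; rewrite lnM ?posrE ?invr_gt0 // lnV ?posrE //.
Qed.

Lemma lnS_le x : 0 < x -> ln (x + 1) - ln x <= x^-1 :> R.
Proof.
move=> hx; rewrite -ln_div ?ltr_wpDr // ?ltr01 //.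
rewrite mulrDl divff ?gt_eqF // mul1r; apply: le_ln1Dx.
have h : 0 < x^-1 by rewrite invr_gt0.
lra.
Qed.

Lemma lnS_ge x : 0 < x -> (x + 1)^-1 <= ln (x + 1) - ln x :> R.
Proof.
move=> hx; have hx1 : 0 < x + 1 by rewrite addr_gt0.
rewrite -opprB lerNr -ln_div //.
have -> : x / (x + 1) = 1 + (- (x + 1)^-1).
  by field; rewrite gt_eqF.
apply: le_ln1Dx; rewrite ltrN2 invf_lt1 //; lra.
Qed.

Definition F x : R := x * ln x - x.

Lemma F_le x : 0 < x -> F (x + 1) - F x <= ln (x + 1).
Proof.
move=> hx; rewrite /F.
have := lnS_le hx; move=> h.
have : x * (ln (x + 1) - ln x) <= x * x^-1 by rewrite ler_wpM2l // ltW.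
rewrite divff ?gt_eqF //; lra.
Qed.

Lemma F_ge x : 0 < x -> ln x <= F (x + 1) - F x.
Proof.
move=> hx; rewrite /F; have hx1 : 0 < x + 1 by rewrite addr_gt0.
have h := lnS_ge hx.
have : (x + 1) * (x + 1)^-1 <= (x + 1) * (ln (x + 1) - ln x) by rewrite ler_wpM2l // ltW.
rewrite divff ?gt_eqF //; lra.
Qed.

Lemma ln_prod_nat (f : nat -> R) n : (forall i, (i < n)%N -> 0 < f i) ->
  ln (\prod_(0 <= i < n) f i) = \sum_(0 <= i < n) ln (f i).
Proof.
elim: n => [|n IH] h; first by rewrite !big_geq // ln1.
rewrite !big_nat_recr //= lnM ?IH //; first by move=> i hi; apply: h; exact: ltnW.
  by rewrite posrE big_nat_cond; apply: prodr_gt0 => i /andP[/andP[_ hi] _]; apply: h; exact: ltnW.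
by rewrite posrE h.
Qed.

Lemma rising_nat a n : rising a n = \prod_(0 <= i < n) (a + i%:R).
Proof. by rewrite /rising big_mkord. Qed.

Lemma rising_gt0 a n : 0 < a -> 0 < rising a n.
Proof.
move=> ha; rewrite /rising; apply: prodr_gt0 => i _.
by apply: ltr_wpDr.
Qed.

Lemma ln_rising a n : 0 < a -> ln (rising a n) = \sum_(0 <= i < n) ln (a + i%:R).
Proof.
move=> ha; rewrite rising_nat ln_prod_nat // => i _; exact: ltr_wpDr.
Qed.

Lemma ln_rising_bounds a n : 0 < a ->
  0 <= F (a + n%:R) - F a - ln (rising a n) <= ln (a + n%:R) - ln a.
Proof.
move=> ha; rewrite ln_rising //.
have tF : F (a + n%:R) - F a = \sum_(0 <= i < n) (F (a + i.+1%:R) - F (a + i%:R)).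
  by rewrite (telescope_sumr (fun i => F (a + i%:R))) // addr0.
have tL : ln (a + n%:R) - ln a = \sum_(0 <= i < n) (ln (a + i.+1%:R) - ln (a + i%:R)).
  by rewrite (telescope_sumr (fun i => ln (a + i%:R))) // addr0.
rewrite tF tL -sumrB; apply/andP; split.
  apply: sumr_ge0 => i _; rewrite subr_ge0 -natr1 addrA; apply: F_ge; exact: ltr_wpDr.
rewrite -subr_ge0 -sumrB; apply: sumr_ge0 => i _.
rewrite -natr1 addrA; have hp : 0 < a + i%:R by exact: ltr_wpDr.
have := F_le hp; lra.
Qed.

Definition Ssum a n : R := \sum_(0 <= i < n) a / (a + i%:R).

Lemma Ssum_bounds a n : 0 < a ->
  a * (ln (a + n%:R) - ln a) <= Ssum a n <= a * (ln (a + n%:R) - ln a) + 1.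
Proof.
move=> ha.
have tL : ln (a + n%:R) - ln a = \sum_(0 <= i < n) (ln (a + i.+1%:R) - ln (a + i%:R)).
  by rewrite (telescope_sumr (fun i => ln (a + i%:R))) // addr0.
have tI : \sum_(0 <= i < n) (a / (a + i%:R) - a / (a + i.+1%:R)) = 1 - a / (a + n%:R).
  rewrite (telescope_sumr_eq (fun i => - (a / (a + i%:R)))) //; last first.
    by move=> k _; rewrite opprK addrC.
  by rewrite addr0 divff ?gt_eqF //; ring.
have hI : 1 - a / (a + n%:R) <= 1.
  rewrite lerBlDr lerDl; apply: divr_ge0; first exact: ltW.
  by apply: addr_ge0; [exact: ltW|].
rewrite tL mulr_sumr /Ssum; apply/andP; split.
  apply: ler_sum_nat => i _; rewrite -natr1 addrA.
  have hp : 0 < a + i%:R by exact: ltr_wpDr.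
  by apply: ler_wpM2l; [exact: ltW | exact: lnS_le].
apply: le_trans (lerD (lexx _) hI); rewrite -tI -big_split /=.
apply: ler_sum_nat => i _; rewrite -natr1 !addrA.
have hp : 0 < a + i%:R by exact: ltr_wpDr.
have := lnS_ge hp; move=> h.
have : a * (a + i%:R + 1)^-1 <= a * (ln (a + i%:R + 1) - ln (a + i%:R)).
  by apply: ler_wpM2l; [exact: ltW | exact: lnS_ge].
lra.
Qed.

End Anal.
Section Conc.
Variable R : realType.

Lemma sum_pred_le m (P : pred 'I_m) (f : 'I_m -> R) :
  (forall i, 0 <= f i) -> \sum_(i < m | P i) f i <= \sum_(i < m) f i.
Proof.
move=> h; rewrite [X in _ <= X](bigID P) /= lerDl; exact: sumr_ge0.
Qed.

Lemma expR_quad (r : R) : -(1/2) <= r <= 1/2 -> 0 <= expR r - 1 - r <= 2 * r ^+ 2.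
Proof.
move=> /andP[h1 h2]; apply/andP; split.
  have := expR_ge1Dx r; lra.
have hN := expR_ge1Dx (- r).
have hp : 0 < 1 - r by lra.
have e1 : expR r * expR (- r) = 1 by rewrite expRxMexpNx_1.
have he : 0 < expR r := expR_gt0 r.
have : expR r * (1 - r) <= expR r * expR (- r) by apply: ler_wpM2l; [exact: ltW | lra].
rewrite e1 => h.
have : (1 + r + 2 * r ^+ 2) * (1 - r) >= 1.
  have : 0 <= r ^+ 2 * (1 - 2 * r) by apply: mulr_ge0; [exact: sqr_ge0 | lra].
  move=> h'; nra.
move=> h3.
have : expR r * (1 - r) <= (1 + r + 2 * r ^+ 2) * (1 - r) by lra.
rewrite ler_pM2r //; lra.
Qed.

Lemma Ssum_ge0 (a : R) n : 0 < a -> 0 <= Ssum a n.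
Proof.
move=> ha; apply: sumr_ge0 => i _; apply: divr_ge0; first exact: ltW.
by apply: addr_ge0; [exact: ltW|].
Qed.

Lemma Ssum_le (a : R) n : 0 < a -> Ssum a n <= n%:R.
Proof.
move=> ha; rewrite /Ssum -[n in X in _ <= X]subn0 -sumr_const_nat.
apply: ler_sum_nat => i _; rewrite ler_pdivrMr ?mul1r ?lerDl //.
by apply: ltr_wpDr.
Qed.

Lemma rising_exp_bound n (a r : R) : 0 < a ->
  rising (a * expR r) n <= rising a n * expR ((expR r - 1) * Ssum a n).
Proof.
move=> ha; rewrite !rising_nat /Ssum mulr_sumr expR_sum -big_split /=.
apply: ler_prod => i _; apply/andP; split.
  by apply: addr_ge0 => //; apply: mulr_ge0; [exact: ltW | exact: expR_ge0].
have hp : 0 < a + i%:R by apply: ltr_wpDr.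
apply: le_trans (_ : (a + i%:R) * (1 + (expR r - 1) * (a / (a + i%:R))) <= _).
  rewrite mulrDr mulr1.
  have -> : (a + i%:R) * ((expR r - 1) * (a / (a + i%:R))) = (expR r - 1) * a.
    by field; rewrite gt_eqF.
  by rewrite le_eqVlt; apply/orP; left; apply/eqP; ring.
apply: ler_wpM2l; [exact: ltW | exact: expR_ge1Dx].
Qed.

Lemma chernoff n (a r z : R) (P : pred 'I_n.+1) : 0 < a ->
  (forall k : 'I_n.+1, P k -> r * z <= r * (k : nat)%:R) ->
  \sum_(k < n.+1 | P k) stirling1 R n k * a ^+ k <= expR (- (r * z)) * rising (a * expR r) n.
Proof.
move=> ha hP.
rewrite -sum_stirling mulr_sumr.
apply: (le_trans _ (sum_pred_le P _)); last first.
  move=> i; apply: mulr_ge0; first exact: expR_ge0.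
  apply: mulr_ge0; first exact: stirling1_ge0.
  by apply: exprn_ge0; apply: mulr_ge0; [exact: ltW | exact: expR_ge0].
apply: ler_sum => k Pk.
rewrite exprMn -expRM_natl mulrCA; apply: ler_wpM2l; first exact: stirling1_ge0.
rewrite mulrCA -expRD -[X in X <= _]mulr1; apply: ler_wpM2l; first by apply: exprn_ge0; exact: ltW.
have := hP k Pk; rewrite -[1]expR0 ler_expR mulrC; lra.
Qed.

Lemma tail_bound n (a d : R) : (0 < n)%N -> 0 < a -> 0 < d <= 1 ->
  \sum_(k < n.+1 | d <= `|(k : nat)%:R / n%:R - Ssum a n / n%:R|) stirling1 R n k * a ^+ k
    <= 2 * rising a n * expR (- (n%:R * d ^+ 2 / 8)).
Proof.
move=> n0 ha /andP[d0 d1].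
have np : 0 < (n%:R : R) by rewrite ltr0n.
set S := Ssum a n.
have S0 : 0 <= S by exact: Ssum_ge0.
have S1 : S <= n%:R by exact: Ssum_le.
rewrite (bigID (fun k : 'I_n.+1 => 0 <= (k : nat)%:R / n%:R - S / n%:R)) /=.
have key : forall (r z : R), -(1/2) <= r <= 1/2 ->
    (expR r - 1) * S - r * z <= - (n%:R * d ^+ 2 / 8) ->
    expR (- (r * z)) * rising (a * expR r) n <= rising a n * expR (- (n%:R * d ^+ 2 / 8)).
  move=> r z hr hexp.
  apply: le_trans (_ : expR (- (r * z)) * (rising a n * expR ((expR r - 1) * S)) <= _).
    apply: ler_wpM2l; first exact: expR_ge0. exact: rising_exp_bound.
  rewrite mulrCA -expRD; apply: ler_wpM2l; first exact: ltW (rising_gt0 _ ha).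
  rewrite ler_expR; lra.
rewrite -mulrA mulr_natl mulr2n; apply: lerD.
- apply: le_trans (chernoff (r := d / 4) (z := S + n%:R * d) _ _) _ => //.
    move=> k /andP[hk h0]; apply: ler_wpM2l; first lra.
    have : d <= (k : nat)%:R / n%:R - S / n%:R by rewrite (ger0_norm h0) in hk.
    rewrite -mulrBl ler_pdivlMr //; lra.
  apply: key; first lra.
  have hq := expR_quad (r := d / 4).
  have : -(1/2) <= d / 4 <= 1/2 by apply/andP; split; lra.
  move=> /hq /andP[q0 q1].
  have : (expR (d / 4) - 1 - d / 4) * S <= 2 * (d / 4) ^+ 2 * n%:R.
    apply: le_trans (_ : 2 * (d / 4) ^+ 2 * S <= _).
      by apply: ler_wpM2r.
    apply: ler_wpM2l => //; apply: mulr_ge0 => //; exact: sqr_ge0.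
  nra.
- apply: le_trans (chernoff (r := - (d / 4)) (z := S - n%:R * d) _ _) _ => //.
    move=> k /andP[hk hneg].
    have hneg' : (k : nat)%:R / n%:R - S / n%:R < 0 by rewrite ltNge.
    have : d <= - ((k : nat)%:R / n%:R - S / n%:R) by rewrite (ltr0_norm hneg') in hk.
    rewrite -mulrBl -mulNr ler_pdivlMr //.
    move=> h; rewrite !mulNr lerN2; apply: ler_wpM2l; lra.
  apply: key; first lra.
  have hq := expR_quad (r := - (d / 4)).
  have : -(1/2) <= - (d / 4) <= 1/2 by apply/andP; split; lra.
  move=> /hq /andP[q0 q1].
  have : (expR (- (d / 4)) - 1 - - (d / 4)) * S <= 2 * (- (d / 4)) ^+ 2 * n%:R.
    apply: le_trans (_ : 2 * (- (d / 4)) ^+ 2 * S <= _).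
      by apply: ler_wpM2r.
    apply: ler_wpM2l => //; apply: mulr_ge0 => //; exact: sqr_ge0.
  nra.
Qed.

End Conc.
Section Lim.
Variable R : realType.
Variable c : R.
Variable n : R -> nat.
Hypothesis c0 : 0 < c.
Hypothesis hc : (fun theta => theta / (n theta)%:R) @ +oo --> c.

Lemma cvg_ln (T : Type) (F : set_system T) (FF : Filter F) (f : T -> R) (l : R) :
  0 < l -> f x @[x --> F] --> l -> ln (f x) @[x --> F] --> ln l.
Proof. move=> l0 hf; exact: (continuous_cvg _ (continuous_ln l0) hf). Qed.

Lemma cvg_expR (T : Type) (F : set_system T) (FF : Filter F) (f : T -> R) (l : R) :
  f x @[x --> F] --> l -> expR (f x) @[x --> F] --> expR l.
Proof. move=> hf; exact: (continuous_cvg _ (@continuous_expR R l) hf). Qed.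

Definition vv theta : R := (n theta)%:R / theta.
Definition uu t theta : R := expR (t * (theta / (n theta)%:R)).

Lemma vv_cvg : vv x @[x --> +oo] --> c^-1.
Proof.
have -> : vv = (fun theta => (theta / (n theta)%:R)^-1).
  by apply: funext => x; rewrite /vv invf_div.
by apply: cvgV; [rewrite gt_eqF | exact: hc].
Qed.

Lemma uu_cvg t : uu t x @[x --> +oo] --> expR (t * c).
Proof. apply: cvg_expR; apply: cvgM; [exact: cvg_cst | exact: hc]. Qed.

Definition H (u v : R) : R := (u + v) * ln (u + v) - u * ln u - (1 + v) * ln (1 + v).

Lemma H_cvg t : H (uu t x) (vv x) @[x --> +oo] --> H (expR (t * c)) c^-1.
Proof.
have e0 : 0 < expR (t * c) := expR_gt0 _.
have ci : 0 < c^-1 by rewrite invr_gt0.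
have hu := @uu_cvg t; have hv := vv_cvg.
apply: cvgB; first apply: cvgB.
- apply: cvgM; first exact: cvgD.
  by apply: cvg_ln; [rewrite addr_gt0 | exact: cvgD].
- by apply: cvgM => //; apply: cvg_ln.
- apply: cvgM; first by apply: cvgD => //; exact: cvg_cst.
  apply: cvg_ln; [rewrite addr_gt0 // | apply: cvgD => //; exact: cvg_cst].
Qed.

End Lim.
Section Lim2.
Variable R : realType.
Variable c : R.
Variable n : R -> nat.
Hypothesis c0 : 0 < c.
Hypothesis n0 : forall theta, (0 < n theta)%N.
Hypothesis hc : (fun theta => theta / (n theta)%:R) @ +oo --> c.

Lemma inv_cvg0 : (x : R)^-1 @[x --> +oo] --> 0.
Proof.
apply/(@gtr0_cvgV0 R R (pinfty_nbhs R) _ id).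
  near=> x; near: x; exact: nbhs_pinfty_gt.
exact: cvg_id.
Unshelve. all: end_near.
Qed.

Lemma F_scale (th X : R) : 0 < th -> 0 < X ->
  F (th * X) = th * (X * ln X) + th * X * ln th - th * X.
Proof.
move=> h1 h2; rewrite /F lnM ?posrE //; ring.
Qed.

Lemma FH (th u v : R) : 0 < th -> 0 < u -> 0 < v ->
  F (th * u + th * v) - F (th * u) - (F (th + th * v) - F th) = th * H u v.
Proof.
move=> h1 h2 h3.
have -> : th + th * v = th * (1 + v) by ring.
have -> : F th = F (th * 1) by rewrite mulr1.
rewrite -mulrDr !F_scale ?addr_gt0 //; rewrite /H ln1; ring.
Qed.

Definition phi t theta : R :=
  theta^-1 * ln (rising (theta * uu n t theta) (n theta) / rising theta (n theta)).

Lemma phi_bounds t th : 0 < th ->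
  H (uu n t th) (vv n th) - th^-1 * (ln (uu n t th + vv n th) - ln (uu n t th)) <= phi t th
  <= H (uu n t th) (vv n th) + th^-1 * ln (1 + vv n th).
Proof.
move=> th0.
set u := uu n t th; set v := vv n th; set N := n th.
have u0 : 0 < u by exact: expR_gt0.
have v0 : 0 < v by rewrite /v /vv divr_gt0 // ltr0n.
have a0 : 0 < th * u by rewrite mulr_gt0.
have hN : (N%:R : R) = th * v by rewrite /v /vv mulrC divfK ?gt_eqF.
have := ln_rising_bounds N a0; have := ln_rising_bounds N th0.
rewrite hN => /andP[b1 b2] /andP[b3 b4].
have e1 : ln (th * u + th * v) - ln (th * u) = ln (u + v) - ln u.
  by rewrite -mulrDr !lnM ?posrE ?addr_gt0 //; ring.
have e2 : ln (th + th * v) - ln th = ln (1 + v).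
  by rewrite -[X in ln (X + _)]mulr1 -mulrDr !lnM ?posrE ?addr_gt0 //; ring.
rewrite e1 in b4; rewrite e2 in b2.
have hF := FH th0 u0 v0.
have hphi : phi t th = th^-1 * (ln (rising (th * u) N) - ln (rising th N)).
  by rewrite /phi ln_div // rising_gt0.
rewrite hphi.
have hH : H u v = th^-1 * (F (th * u + th * v) - F (th * u) - (F (th + th * v) - F th)).
  by rewrite hF mulKf ?gt_eqF.
rewrite hH; set Fa := F (th * u + th * v) in b3 b4 *; set Fb := F (th + th * v) in b1 b2 *.
rewrite -mulrBr -mulrDr.
have ti : 0 < th^-1 by rewrite invr_gt0.
apply/andP; split; apply: ler_wpM2l; try exact: ltW; lra.
Qed.

Definition Lam t : R := H (expR (t * c)) c^-1.

Lemma phi_cvg t : phi t x @[x --> +oo] --> Lam t.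
Proof.
have hu := @uu_cvg R c n hc t; have hv := @vv_cvg R c n c0 hc.
have e0 : 0 < expR (t * c) := expR_gt0 _.
have ci : 0 < c^-1 by rewrite invr_gt0.
apply: (@squeeze_cvgr _ _ _ _
   (fun th => H (uu n t th) (vv n th) - th^-1 * (ln (uu n t th + vv n th) - ln (uu n t th)))
   (fun th => H (uu n t th) (vv n th) + th^-1 * ln (1 + vv n th))).
- near=> th; apply: phi_bounds; near: th; exact: nbhs_pinfty_gt.
- rewrite -[Lam t]subr0 -[0](mul0r (ln (expR (t * c) + c^-1) - ln (expR (t * c)))).
  apply: cvgB; first exact: H_cvg.
  apply: cvgM; first exact: inv_cvg0.
  apply: cvgB; [apply: cvg_ln; [rewrite addr_gt0 // | exact: cvgD] | exact: cvg_ln].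
- rewrite -[Lam t]addr0 -[0](mul0r (ln (1 + c^-1))).
  apply: cvgD; first exact: H_cvg.
  apply: cvgM; first exact: inv_cvg0.
  apply: cvg_ln; [rewrite addr_gt0 // | apply: cvgD => //; exact: cvg_cst].
Unshelve. all: end_near.
Qed.

End Lim2.
Section Lim3.
Variable R : realType.
Variable c : R.
Variable n : R -> nat.
Hypothesis c0 : 0 < c.
Hypothesis n0 : forall theta, (0 < n theta)%N.
Hypothesis hn : ((n theta)%:R : R) @[theta --> +oo] --> +oo.
Hypothesis hc : (fun theta => theta / (n theta)%:R) @ +oo --> c.

Lemma Lam_eq t : Lam c t = Lambda3 c t.
Proof.
rewrite /Lam /H /Lambda3 (mulrC t c).
set E := expR (c * t).
have E0 : 0 < E := expR_gt0 _.
have ci : 0 < c^-1 by rewrite invr_gt0.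
have -> : E + c^-1 = c^-1 * (1 + c * E) by field; rewrite gt_eqF.
have -> : 1 + c^-1 = c^-1 * (1 + c) by field; rewrite gt_eqF.
have -> : ln E = ln (c * E) - ln c by rewrite lnM ?posrE //; ring.
rewrite !lnM ?posrE ?addr_gt0 ?mulr_gt0 // lnV ?posrE //.
by field; rewrite gt_eqF.
Qed.

Definition Ytil t theta : R :=
  Ssum (theta * uu n t theta) (n theta) / (n theta)%:R.

Definition Gf (u v : R) : R := u / v * (ln (u + v) - ln u).

Definition yy t : R := Gf (expR (t * c)) c^-1.

Lemma Ytil_bounds t th : 0 < th ->
  Gf (uu n t th) (vv n th) <= Ytil t th <= Gf (uu n t th) (vv n th) + ((n th)%:R)^-1.
Proof.
move=> th0.
set u := uu n t th; set v := vv n th; set N := n th.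
have u0 : 0 < u by exact: expR_gt0.
have N0 : 0 < (N%:R : R) by rewrite ltr0n; exact: n0.
have v0 : 0 < v by rewrite /v /vv divr_gt0.
have a0 : 0 < th * u by rewrite mulr_gt0.
have hN : (N%:R : R) = th * v by rewrite /v /vv mulrC divfK ?gt_eqF.
have := Ssum_bounds N a0; rewrite hN => /andP[b1 b2].
have e1 : ln (th * u + th * v) - ln (th * u) = ln (u + v) - ln u.
  by rewrite -mulrDr !lnM ?posrE ?addr_gt0 //; ring.
rewrite e1 in b1 b2.
have hG : Gf u v = th * u * (ln (u + v) - ln u) / (th * v).
  by rewrite /Gf; field; rewrite !gt_eqF.
rewrite /Ytil -/u -/N hN hG.
have tv : 0 < th * v by rewrite mulr_gt0.
rewrite -[X in _ <= _ <= _ + X]mul1r -mulrDl.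
apply/andP; split; apply: ler_wpM2r => //; rewrite invr_ge0; exact: ltW.
Qed.

Lemma Ninv_cvg0 : ((n x)%:R : R)^-1 @[x --> +oo] --> 0.
Proof.
apply/(@gtr0_cvgV0 R R (pinfty_nbhs R) _ (fun x => (n x)%:R)) => //.
by near=> x; rewrite ltr0n.
Unshelve. all: end_near.
Qed.

Lemma Ytil_cvg t : Ytil t x @[x --> +oo] --> yy t.
Proof.
have hu := @uu_cvg R c n hc t; have hv := @vv_cvg R c n c0 hc.
have e0 : 0 < expR (t * c) := expR_gt0 _.
have ci : 0 < c^-1 by rewrite invr_gt0.
have hG : Gf (uu n t x) (vv n x) @[x --> +oo] --> yy t.
  apply: cvgM; first by apply: cvgM => //; apply: cvgV => //; rewrite gt_eqF.
  by apply: cvgB; [apply: cvg_ln; [rewrite addr_gt0 // | exact: cvgD] | exact: cvg_ln].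
apply: (@squeeze_cvgr _ _ _ _ (fun th => Gf (uu n t th) (vv n th))
   (fun th => Gf (uu n t th) (vv n th) + ((n th)%:R)^-1)) => //.
- near=> th; apply: Ytil_bounds; near: th; exact: nbhs_pinfty_gt.
- rewrite -[yy t]addr0; apply: cvgD => //; exact: Ninv_cvg0.
Unshelve. all: end_near.
Qed.

End Lim3.
Section Fin.
Variable R : realType.
Variable c : R.
Variable n : R -> nat.
Hypothesis n0 : forall theta, (0 < n theta)%N.

Lemma Kn_law_E (th : R) N (A : set R) : (0 < N)%N ->
  Kn_law th N A = \sum_(k < N.+1 | `[< A ((k : nat)%:R / N%:R) >])
                    stirling1 R N k * th ^+ k / rising th N.
Proof.
move=> N0; rewrite /Kn_law [RHS]big_mkcond /=.
rewrite -(big_mkord xpredT (fun k => if `[< A (k%:R / N%:R) >] then stirling1 R N k * th ^+ k / rising th N else 0)) /=.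
rewrite [RHS](big_ltn (m := 0)) //= stirling1_0 // !mul0r; case: ifP => _; by rewrite add0r.
Qed.

Lemma le_sum_mem (s : seq R) (f : R -> R) t0 : t0 \in s -> (forall t, 0 <= f t) ->
  f t0 <= \sum_(t <- s) f t.
Proof.
elim: s => // x s IH; rewrite in_cons big_cons => /orP[/eqP -> | h] hf.
  by rewrite lerDl; apply: sumr_ge0.
by apply: le_trans (IH h hf) _; rewrite lerDr.
Qed.

Lemma mgf (th s : R) N :
  \sum_(k < N.+1) stirling1 R N k * th ^+ k * expR (s * (k : nat)%:R) = rising (th * expR s) N.
Proof.
rewrite -sum_stirling; apply: eq_bigr => k _.
by rewrite exprMn -expRM_natl (mulrC _ s) mulrA.
Qed.

Lemma expR_phi t th : 0 < th ->
  expR (th * phi n t th) = rising (th * uu n t th) (n th) / rising th (n th).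
Proof.
move=> th0; rewrite /phi mulrA divff ?gt_eqF // mul1r lnK // posrE.
by apply: divr_gt0; apply: rising_gt0 => //; rewrite mulr_gt0 // expR_gt0.
Qed.

Lemma upper_finite th (A : set R) (s : seq R) (a : R) (L : R -> R) : 0 < th ->
  (forall y, A y -> exists2 t, t \in s & a + L t < t * y) ->
  Kn_law th (n th) A <= \sum_(t <- s) expR (th * (phi n t th - a - L t)).
Proof.
move=> th0 hA; set N := n th.
have N0 : (0 < N)%N by exact: n0.
have Np : 0 < (N%:R : R) by rewrite ltr0n.
have Rp : 0 < rising th N by exact: rising_gt0.
rewrite Kn_law_E //.
set T := fun k : 'I_N.+1 => stirling1 R N k * th ^+ k / rising th N.
have T0 : forall k, 0 <= T k.
  move=> k; apply: divr_ge0; last exact: ltW.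
  by apply: mulr_ge0; [exact: stirling1_ge0 | apply: exprn_ge0; exact: ltW].
apply: (@le_trans _ _ (\sum_(k < N.+1) \sum_(t <- s)
          T k * expR (th * (t * ((k : nat)%:R / N%:R)) - th * (a + L t)))).
  apply: (le_trans _ (sum_pred_le _ _)); last first.
    by move=> i; apply: sumr_ge0 => t _; apply: mulr_ge0 => //; exact: expR_ge0.
  apply: ler_sum => k /asboolP Ak.
  have [t ts ht] := hA _ Ak.
  apply: le_trans (le_sum_mem (f := fun t => T k * expR (th * (t * ((k : nat)%:R / N%:R)) - th * (a + L t))) ts _); last first.
    by move=> x; apply: mulr_ge0 => //; exact: expR_ge0.
  rewrite -[X in X <= _]mulr1; apply: ler_wpM2l; first exact: T0.
  apply: le_trans (expR_ge1Dx _); rewrite lerDl subr_ge0.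
  apply: ler_wpM2l; [exact: ltW | exact: ltW].
rewrite exchange_big /=; apply: ler_sum => t _.
have -> : \sum_(k < N.+1) T k * expR (th * (t * ((k : nat)%:R / N%:R)) - th * (a + L t))
   = expR (- (th * (a + L t))) / rising th N *
     \sum_(k < N.+1) stirling1 R N k * th ^+ k * expR ((t * (th / N%:R)) * (k : nat)%:R).
  rewrite mulr_sumr; apply: eq_bigr => k _; rewrite /T expRD.
  have -> : th * (t * ((k : nat)%:R / N%:R)) = t * (th / N%:R) * (k : nat)%:R.
    by ring.
  by ring.
rewrite mgf -/(uu n t th) -/N.
have -> : th * (phi n t th - a - L t) = th * phi n t th + - (th * (a + L t)) by ring.
rewrite expRD expR_phi // le_eqVlt; apply/orP; left; apply/eqP.
rewrite /N; field; rewrite gt_eqF //.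
Qed.

End Fin.
Section Fin2.
Variable R : realType.
Variable n : R -> nat.
Hypothesis n0 : forall theta, (0 < n theta)%N.

Lemma lower_finite th (G : set R) t d : 0 < th -> 0 < d <= 1 ->
  (forall k : nat, (k <= n th)%N ->
     `|k%:R / (n th)%:R - Ytil n t th| < d -> G (k%:R / (n th)%:R)) ->
  2 * expR (- ((n th)%:R * d ^+ 2 / 8)) <= 1/2 ->
  1/2 * expR (th * (phi n t th - t * Ytil n t th - `|t| * d)) <= Kn_law th (n th) G.
Proof.
move=> th0 hd hG hsmall; set N := n th.
have N0 : (0 < N)%N by exact: n0.
have Np : 0 < (N%:R : R) by rewrite ltr0n.
have Rp : 0 < rising th N by exact: rising_gt0.
set u := uu n t th; set a := th * u.
have u0 : 0 < u by exact: expR_gt0.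
have a0 : 0 < a by rewrite mulr_gt0.
have Ra : 0 < rising a N by exact: rising_gt0.
set Y := Ytil n t th.
have hY : Y = Ssum a N / N%:R by [].
rewrite Kn_law_E //.
set T := fun k : 'I_N.+1 => stirling1 R N k * th ^+ k / rising th N.
have T0 : forall k, 0 <= T k.
  move=> k; apply: divr_ge0; last exact: ltW.
  by apply: mulr_ge0; [exact: stirling1_ge0 | apply: exprn_ge0; exact: ltW].
set near := fun k : 'I_N.+1 => `|(k : nat)%:R / N%:R - Y| < d.
set C := expR (- (th * (t * Y + `|t| * d))) / rising th N.
have C0 : 0 <= C by apply: divr_ge0; [exact: expR_ge0 | exact: ltW].
have h1 : \sum_(k < N.+1 | near k) T k <= \sum_(k < N.+1 | `[< G ((k : nat)%:R / N%:R) >]) T k.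
  rewrite [X in _ <= X](bigID near) /=.
  apply: le_trans (_ : _ <= \sum_(k < N.+1 | `[< G ((k : nat)%:R / N%:R) >] && near k) T k) _.
    rewrite le_eqVlt; apply/orP; left; apply/eqP; apply: eq_bigl => k.
    case nk: (near k); rewrite ?andbF ?andbT //.
    by apply/esym/asboolP; apply: hG => //; rewrite -ltnS; exact: ltn_ord.
  by rewrite lerDl; apply: sumr_ge0.
have h2 : forall k, near k -> C * (stirling1 R N k * a ^+ k) <= T k.
  move=> k nk.
  have -> : T k = expR (- (t * (th / N%:R) * (k : nat)%:R)) / rising th N * (stirling1 R N k * a ^+ k).
    rewrite /T /a exprMn /u /uu -expRM_natl.
    have -> : expR ((k : nat)%:R * (t * (th / N%:R))) = expR (t * (th / N%:R) * (k : nat)%:R) by rewrite mulrC.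
    rewrite expRN; field.
    by rewrite !gt_eqF ?expR_gt0.
  rewrite /C; apply: ler_wpM2r; first by apply: mulr_ge0; [exact: stirling1_ge0 | apply: exprn_ge0; exact: ltW].
  apply: ler_wpM2r; first by rewrite invr_ge0; exact: ltW.
  rewrite ler_expR lerN2.
  have -> : t * (th / N%:R) * (k : nat)%:R = th * (t * ((k : nat)%:R / N%:R)) by ring.
  apply: ler_wpM2l; first exact: ltW.
  have : t * ((k : nat)%:R / N%:R - Y) <= `|t| * d.
    apply: le_trans (ler_norm _) _; rewrite normrM; apply: ler_wpM2l => //; exact: ltW.
  lra.
have h3 : rising a N / 2 <= \sum_(k < N.+1 | near k) stirling1 R N k * a ^+ k.
  have tb := tail_bound N0 a0 hd.
  have hs := sum_stirling N a.
  rewrite (bigID (fun k : 'I_N.+1 => d <= `|(k : nat)%:R / N%:R - Ssum a N / N%:R|)) /= in hs.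
  have -> : \sum_(k < N.+1 | near k) stirling1 R N k * a ^+ k =
      \sum_(k < N.+1 | ~~ (d <= `|(k : nat)%:R / N%:R - Ssum a N / N%:R|)) stirling1 R N k * a ^+ k.
    by apply: eq_bigl => k; rewrite /near -ltNge.
  have : 2 * rising a N * expR (- (N%:R * d ^+ 2 / 8)) <= rising a N / 2.
    have := ler_wpM2l (ltW Ra) hsmall; lra.
  lra.
apply: le_trans h1.
apply: le_trans (_ : C * (rising a N / 2) <= _).
  rewrite le_eqVlt; apply/orP; left; apply/eqP.
  have -> : th * (phi n t th - t * Y - `|t| * d) = th * phi n t th + - (th * (t * Y + `|t| * d)) by ring.
  rewrite expRD expR_phi // /C -/u -/a -/N; field; by rewrite gt_eqF.
apply: le_trans (_ : \sum_(k < N.+1 | near k) C * (stirling1 R N k * a ^+ k) <= _).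
  by rewrite -mulr_sumr; apply: ler_wpM2l.
by apply: ler_sum => k nk; apply: h2.
Qed.

End Fin2.
Section Choose.
Variable R : realType.
Variable c : R.
Hypothesis c0 : 0 < c.

Definition gg (w : R) : R := w * (ln (w + 1) - ln w).

Lemma yy_gg t : yy c t = gg (c * expR (t * c)).
Proof.
rewrite /yy /Gf /gg.
set E := expR (t * c); have E0 : 0 < E := expR_gt0 _.
have ci : 0 < c^-1 by rewrite invr_gt0.
have -> : c * E + 1 = c * (E + c^-1) by field; rewrite gt_eqF.
rewrite !lnM ?posrE ?addr_gt0 //.
by field; rewrite gt_eqF.
Qed.

Lemma gg_bounds w : 0 < w -> w / (w + 1) <= gg w <= 1.
Proof.
move=> w0; rewrite /gg; apply/andP; split.
  by apply: ler_wpM2l; [exact: ltW | exact: lnS_ge].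
have := lnS_le w0 => h.
have : w * (ln (w + 1) - ln w) <= w * w^-1 by apply: ler_wpM2l => //; exact: ltW.
by rewrite divff ?gt_eqF.
Qed.

Lemma gg_gt0 w : 0 < w -> 0 < gg w.
Proof.
move=> w0; have /andP[h _] := gg_bounds w0.
by apply: lt_le_trans h; rewrite divr_gt0 // addr_gt0.
Qed.

Lemma gg_small m : 0 < m -> gg (expR (- m)) <= 4 / m.
Proof.
move=> m0; rewrite /gg expRK.
set w := expR (- m).
have w0 : 0 < w := expR_gt0 _.
have l1 : ln (w + 1) <= w by rewrite addrC le_ln1Dx //; lra.
have w1 : w <= 1 by rewrite /w expR_le1; lra.
have e1 := expR_ge1Dx m.
have e2 : 1 + m ^+ 2 / 2 <= expR m by exact: (expR_ge1Dxn 1 (ltW m0)).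
have ew : w * expR m = 1 by rewrite /w mulrC expRxMexpNx_1.
have : w * (ln (w + 1) - - m) <= w * (1 + m) by apply: ler_wpM2l; [exact: ltW | lra].
move=> h; apply: le_trans h _.
rewrite ler_pdivlMr //.
have em : 0 < expR m := expR_gt0 _.
have : (1 + m) * m <= 4 * expR m.
  nra.
move=> h2.
have : w * ((1 + m) * m) <= w * (4 * expR m) by apply: ler_wpM2l => //; exact: ltW.
move=> h3; nra.
Qed.

Lemma gg_cont w : 0 < w -> {for w, continuous gg}.
Proof.
move=> w0; rewrite /gg.
apply: cvgM; first exact: cvg_id.
apply: cvgB; last exact: (continuous_ln w0).
apply: cvg_ln; first by rewrite addr_gt0.
by apply: cvgD; [exact: cvg_id | exact: cvg_cst].
Qed.

Definition tw (w : R) : R := ln (w / c) / c.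

Lemma tw_eq w : 0 < w -> c * expR (tw w * c) = w.
Proof.
move=> w0; rewrite /tw divfK ?gt_eqF // lnK ?posrE ?divr_gt0 //.
by rewrite mulrC divfK ?gt_eqF.
Qed.

Lemma choose_t x e : 0 <= x <= 1 -> 0 < e ->
  exists t, `|yy c t - x| < e /\ 0 <= t * (x - yy c t).
Proof.
move=> /andP[x0 x1] e0.
have [x0'|xpos] := eqVneq x 0.
  subst x.
  set m := 1 + `|ln c| + 4 / e.
  have e4 : 0 < 4 / e by rewrite divr_gt0.
  have nc := normr_ge0 (ln c).
  have m0 : 0 < m by rewrite /m; lra.
  set w := expR (- m).
  have w0 : 0 < w := expR_gt0 _.
  exists (tw w); rewrite yy_gg tw_eq // subr0.
  have g0 := gg_gt0 w0.
  have hs := gg_small m0.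
  have : 4 / m < e.
    rewrite ltr_pdivrMr // mulrC -ltr_pdivrMr //; rewrite /m; lra.
  move=> hme; split; first by rewrite gtr0_norm //; lra.
  have : tw w <= 0.
    rewrite /tw pmulr_lle0 ?invr_gt0 //; apply: ln_le0.
    rewrite ler_pdivrMr // mul1r /w -[X in _ <= X](lnK (x := c)) ?posrE // ler_expR.
    have := ler_norm (- ln c); rewrite normrN /m; lra.
  move=> ht; nra.
have [x1'|xlt1] := eqVneq x 1.
  subst x.
  set w := c + e^-1.
  have ei : 0 < e^-1 by rewrite invr_gt0.
  have w0 : 0 < w by rewrite addr_gt0.
  exists (tw w); rewrite yy_gg tw_eq //.
  have /andP[g1 g2] := gg_bounds w0.
  split.
    rewrite distrC ger0_norm ?subr_ge0 //.
    have : 1 - w / (w + 1) < e.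
      have -> : 1 - w / (w + 1) = (w + 1)^-1 by field; rewrite gt_eqF // addr_gt0.
      rewrite invf_plt ?posrE ?addr_gt0 //; rewrite /w addrAC addrC ltrDl addr_gt0 //.
    lra.
  apply: mulr_ge0; last by rewrite subr_ge0.
  rewrite /tw; apply: divr_ge0; last exact: ltW; apply: ln_ge0.
  by rewrite ler_pdivlMr // mul1r /w lerDl ltW.
have xp : 0 < x by rewrite lt_neqAle eq_sym xpos.
have xl : x < 1 by rewrite lt_neqAle xlt1.
set m := 1 + 4 / x.
have x4 : 0 < 4 / x by rewrite divr_gt0.
have m0 : 0 < m by rewrite /m; lra.
set w1 := expR (- m).
have w10 : 0 < w1 := expR_gt0 _.
have g1 : gg w1 < x.
  apply: le_lt_trans (gg_small m0) _.
  rewrite ltr_pdivrMr // mulrC -ltr_pdivrMr // /m; lra.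
set w2 := x / (1 - x).
have w20 : 0 < w2 by rewrite divr_gt0 // subr_gt0.
have g2 : x <= gg w2.
  have /andP[h _] := gg_bounds w20.
  apply: le_trans h.
  have -> : w2 / (w2 + 1) = x.
    rewrite /w2; field; apply/andP; split; first by rewrite subr_eq0 eq_sym lt_eqF.
    by rewrite addrC subrK oner_neq0.
  by [].
have cont : forall a b, 0 < a -> {within `[a, b], continuous gg}.
  move=> a b a0; apply: continuous_in_subspaceT => y.
  rewrite inE /= in_itv /= => /andP[ay _]; apply: gg_cont.
  exact: lt_le_trans ay.
have [w [w0 gw]] : exists w, 0 < w /\ gg w = x.
  have [h|h] := leP w1 w2.
    have hv : Num.min (gg w1) (gg w2) <= x <= Num.max (gg w1) (gg w2).
      by rewrite ge_min le_max (ltW g1) g2 orbT.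
    have [w hw gw] := @IVT R gg w1 w2 x h (cont w1 w2 w10) hv.
    exists w; split => //; move: hw; rewrite in_itv /= => /andP[hw _].
    exact: lt_le_trans hw.
  have hv : Num.min (gg w2) (gg w1) <= x <= Num.max (gg w2) (gg w1).
    by rewrite ge_min le_max (ltW g1) g2 orbT.
  have [w hw gw] := @IVT R gg w2 w1 x (ltW h) (cont w2 w1 w20) hv.
  exists w; split => //; move: hw; rewrite in_itv /= => /andP[hw _].
  exact: lt_le_trans hw.
exists (tw w); rewrite yy_gg tw_eq // gw subrr normr0 mulr0; split => //.
Qed.

End Choose.
Section Ereal.
Variable R : realType.
Local Open Scope ereal_scope.

Lemma limsup_crit (f : R -> \bar R) (b : R) :
  (forall eta : R, (0 < eta)%R -> \forall th \near pinfty_nbhs R, f th <= (b + eta)%:E) ->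
  limf_esup f (pinfty_nbhs R) <= b%:E.
Proof.
move=> h; apply/lee_addgt0Pr => eta eta0.
have hV := h eta eta0.
rewrite limf_esupE.
apply: le_trans (ereal_inf_lbound (_ : [set ereal_sup [set f x | x in V0] | V0 in pinfty_nbhs R] (ereal_sup [set f x | x in [set th | f th <= (b + eta)%:E]])) ) _.
  by exists [set th | f th <= (b + eta)%:E].
by apply: ge_ereal_sup => _ [y hy <-]; exact: hy.
Qed.

Lemma liminf_crit (f : R -> \bar R) (b : R) :
  (forall eta : R, (0 < eta)%R -> \forall th \near pinfty_nbhs R, (b - eta)%:E <= f th) ->
  b%:E <= limf_einf f (pinfty_nbhs R).
Proof.
move=> h.
rewrite -[limf_einf f _]oppeK -limf_esupN leeNr -EFinN; apply: limsup_crit => eta eta0.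
have := h eta eta0; apply: filterS => th hth /=.
by rewrite leeNl -EFinN opprD opprK.
Qed.

Lemma neg_inf_crit (X L : \bar R) :
  (forall a : R, a%:E < L -> X <= (- a)%:E) -> X <= - L.
Proof.
case: L => [r| |] h.
- apply/lee_addgt0Pr => e e0.
  have := h (r - e)%R; rewrite lte_fin ltrBlDr ltrDl e0 => /(_ isT).
  by rewrite -EFinN -EFinD opprB addrC.
- have hX : forall a : R, X <= a%:E.
    by move=> a; rewrite -[a]opprK; apply: h; exact: ltry.
  clear h; case: X hX => [x| |] hX //=.
  + have := hX (x - 1)%R; rewrite lee_fin => hh; exfalso; move: hh; clear; move=> hh; lra.
  + by have := hX 0%R.
- by rewrite /= leey.
Qed.

End Ereal.

Lemma near_all (R : realType) (s : seq R) (P : R -> R -> Prop) :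
  (forall t, \forall th \near pinfty_nbhs R, P t th) ->
  \forall th \near pinfty_nbhs R, forall t, t \in s -> P t th.
Proof.
move=> h; elim: s => [|x s IH].
  by apply: nearW => th t.
have := h x; move=> hx.
near=> th => t; rewrite in_cons => /orP[/eqP -> | ts].
  by near: th.
by move: t ts; near: th.
Unshelve. all: end_near.
Qed.
Section Main.
Variable R : realType.
Variable c : R.
Variable n : R -> nat.
Hypothesis c0 : 0 < c.
Hypothesis n0 : forall theta, (0 < n theta)%N.
Hypothesis hn : ((n theta)%:R : R) @[theta --> +oo] --> +oo.
Hypothesis hc : theta / (n theta)%:R @[theta --> +oo] --> (c : R).

Lemma I_ge x t : ((t * x - Lambda3 c t)%:E <= rate3 c x)%E.
Proof. by apply: ereal_sup_ubound; exists t. Qed.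

Lemma L0 : Lambda3 c 0 = 0.
Proof. by rewrite -(Lam_eq c0) /Lam /H mul0r expR0 ln1; ring. Qed.

Lemma rate_ge0 x : (0 <= rate3 c x)%E.
Proof. by apply: le_trans (I_ge x 0); rewrite L0 mul0r subr0. Qed.

Lemma cont_aff t b : continuous (fun x : R => t * x - b).
Proof.
move=> x; apply: cvgB; last exact: cvg_cst.
by apply: cvgM; [exact: cvg_cst | exact: cvg_id].
Qed.

Lemma part2 (a : R) : closed [set x | unit01 x /\ (rate3 c x <= a%:E)%E].
Proof.
have -> : [set x | unit01 x /\ (rate3 c x <= a%:E)%E] =
    (@unit01 R) `&` \bigcap_(t in [set: R]) [set x | t * x - Lambda3 c t <= a].
  apply/seteqP; split => x /=.
    move=> [ux hI]; split => // t _ /=; rewrite -lee_fin; exact: le_trans (I_ge x t) hI.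
  move=> [ux hx]; split => //; apply: ge_ereal_sup => _ [t _ <-]; rewrite lee_fin; exact: hx.
apply: closedI; first exact: itv_closed.
apply: closed_bigI => t _.
have hc' : continuous (fun x : R => t * x - Lambda3 c t) := @cont_aff t _.
exact: (continuous_closedP _).1 hc' _ (@closed_le _ a).
Qed.

End Main.
Section Main2.
Variable R : realType.
Variable c : R.
Variable n : R -> nat.
Hypothesis c0 : 0 < c.
Hypothesis n0 : forall theta, (0 < n theta)%N.
Hypothesis hn : ((n theta)%:R : R) @[theta --> +oo] --> +oo.
Hypothesis hc : theta / (n theta)%:R @[theta --> +oo] --> (c : R).

Lemma Kn_ge0 th (A : set R) : 0 < th -> 0 <= Kn_law th (n th) A.
Proof.
move=> th0; rewrite Kn_law_E //; apply: sumr_ge0 => k _.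
apply: divr_ge0; last exact: ltW (rising_gt0 _ th0).
by apply: mulr_ge0; [exact: stirling1_ge0 | apply: exprn_ge0; exact: ltW].
Qed.

Lemma sum_const_seq (s : seq R) (K : R) : \sum_(t <- s) K = (size s)%:R * K.
Proof.
elim: s => [|x s IH]; first by rewrite big_nil mul0r.
by rewrite big_cons IH /= -natr1 mulrDl mul1r addrC.
Qed.

Lemma cont_mul (t : R) : continuous (fun x : R => t * x).
Proof. by move=> x; apply: cvgM; [exact: cvg_cst | exact: cvg_id]. Qed.

Lemma part3 (F : set R) : F `<=` @unit01 R ->
  (limf_esup (fun th => scaled_log th (Kn_law th (n th) F)) (pinfty_nbhs R)
     <= - ereal_inf (rate3 c @` closure F))%E.
Proof.
move=> FU.
have cl01 : closed (@unit01 R) by exact: itv_closed.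
have CU : closure F `<=` @unit01 R.
  by have := closure_subset FU; rewrite -((closure_id _).1 cl01).
have Ccomp : compact (closure F).
  exact: (subclosed_compact (@closed_closure _ F) (@segment_compact R 0 1) CU).
apply: neg_inf_crit => a ha.
have hx : forall x, closure F x -> exists t, a + Lambda3 c t < t * x.
  move=> x Cx.
  have : (a%:E < rate3 c x)%E.
    apply: lt_le_trans ha _; apply: ereal_inf_lbound; by exists x.
  move=> /ereal_sup_gt [_ [t _ <-]]; rewrite lte_fin => h; exists t; lra.
move: Ccomp; rewrite compact_cover => Ccomp.
have hop : forall t, [set: R] t -> open [set y | a + Lambda3 c t < t * y].
  move=> t _; have h := (continuousP _).1 (@cont_mul t) _ (@open_gt _ (a + Lambda3 c t)); exact: h.
have hcov : closure F `<=` cover [set: R] (fun t => [set y | a + Lambda3 c t < t * y]).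
  move=> x Cx; have [t ht] := hx x Cx; by exists t.
have [D' _ hD] := Ccomp R _ _ hop hcov.
apply: limsup_crit => eta eta0.
have eta2 : 0 < eta / 2 by rewrite divr_gt0.
set s := finmap.enum_fset D'.
set m : R := (size s)%:R.
have hphi : \forall th \near pinfty_nbhs R, forall t, t \in s -> phi n t th <= Lam c t + eta / 2.
  apply: near_all => t.
  have H : \forall th \near pinfty_nbhs R, `|Lam c t - phi n t th| < eta / 2.
    exact: (cvgrPdist_lt _ _).1 (phi_cvg c0 n0 hc (t := t)) (eta / 2) eta2.
  near=> th; have h : `|Lam c t - phi n t th| < eta / 2 by near: th; exact: H.
  have h1 : - (eta / 2) < Lam c t - phi n t th :> R by move: h; rewrite ltr_norml => /andP[].
  lra.
have K0 : 0 < `|ln m| + 1 by have := normr_ge0 (ln m); lra.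
have hinv : \forall th \near pinfty_nbhs R, `|0 - th^-1| < eta / 2 / (`|ln m| + 1).
  exact: (cvgrPdist_lt _ _).1 (@inv_cvg0 R) _ (divr_gt0 eta2 K0).
near=> th.
have th0 : 0 < th by near: th; exact: nbhs_pinfty_gt.
have hphi' : forall t, t \in s -> phi n t th <= Lam c t + eta / 2 by near: th; exact: hphi.
have hi : `|0 - th^-1| < eta / 2 / (`|ln m| + 1) by near: th; exact: hinv.
have hK := upper_finite n0 (A := F) (s := s) (a := a) (L := Lam c) th0.
have hK' : Kn_law th (n th) F <= m * expR (th * (eta / 2 - a)).
  rewrite /m -sum_const_seq; apply: le_trans (hK _) _.
    move=> y Fy; have [t [tD ht]] := hD y (subset_closure Fy).
    by exists t => //; rewrite (Lam_eq c0).
  rewrite big_seq_cond [X in _ <= X]big_seq_cond; apply: ler_sum => t /andP[tD _].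
  rewrite ler_expR; apply: ler_wpM2l; first exact: ltW.
  have := hphi' t tD; lra.
rewrite /scaled_log; case: eqP => [_ | hP]; first exact: leNye.
have P0 : 0 < Kn_law th (n th) F by rewrite lt_neqAle eq_sym; apply/andP; split; [apply/eqP | exact: Kn_ge0].
have mE0 : 0 < m * expR (th * (eta / 2 - a)) by exact: lt_le_trans P0 hK'.
have m0 : 0 < m by move: mE0; rewrite pmulr_lgt0 // expR_gt0.
rewrite lee_fin.
have hl : ln (Kn_law th (n th) F) <= ln m + th * (eta / 2 - a).
  by rewrite -[X in _ + X]expRK -lnM ?posrE ?expR_gt0 // ler_ln ?posrE.
have ti : 0 < th^-1 by rewrite invr_gt0.
have : th^-1 * ln (Kn_law th (n th) F) <= th^-1 * (ln m + th * (eta / 2 - a)).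
  by apply: ler_wpM2l => //; exact: ltW.
rewrite mulrDr mulrA mulVf ?gt_eqF // mul1r.
have : th^-1 * ln m <= eta / 2.
  apply: le_trans (ler_norm _) _; rewrite normrM (gtr0_norm ti).
  move: hi; rewrite sub0r normrN (gtr0_norm ti) => hi.
  have : th^-1 * `|ln m| <= th^-1 * (`|ln m| + 1) by apply: ler_wpM2l; [exact: ltW | lra].
  move=> h1; apply: le_trans h1 _.
  by rewrite -ler_pdivlMr // ltW.
lra.
Unshelve. all: end_near.
Qed.

End Main2.
Section Main3.
Variable R : realType.
Variable c : R.
Variable n : R -> nat.
Hypothesis c0 : 0 < c.
Hypothesis n0 : forall theta, (0 < n theta)%N.
Hypothesis hn : ((n theta)%:R : R) @[theta --> +oo] --> +oo.
Hypothesis hc : theta / (n theta)%:R @[theta --> +oo] --> (c : R).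

Lemma part4 (G : set R) : G `<=` @unit01 R ->
  (- ereal_inf (rate3 c @` rel_interior01 G)
     <= limf_einf (fun th => scaled_log th (Kn_law th (n th) G)) (pinfty_nbhs R))%E.
Proof.
move=> GU.
rewrite leeNl; apply: le_ereal_inf_tmp => _ [x [Gx [e e0 he]] <-].
rewrite leeNl.
have ux : 0 <= x <= 1 by have := GU x Gx; rewrite /unit01 /= in_itv.
case hIx : (rate3 c x) => [r| |]; last first.
- by have := rate_ge0 c0 x; rewrite hIx.
- by rewrite /= leNye.
rewrite -EFinN; apply: liminf_crit => eta eta0.
have e2 : 0 < e / 2 by rewrite divr_gt0.
have [t [hY hsign]] := choose_t c0 ux e2.
have hr : t * x - Lam c t <= r.
  by have := I_ge c x t; rewrite hIx lee_fin (Lam_eq c0).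
set Y := yy c t.
set K := `|t| + 1.
have K0 : 0 < K by rewrite /K; have := normr_ge0 t; lra.
have e4 : 0 < e / 4 by rewrite divr_gt0.
have eK : 0 < eta / (4 * K) by rewrite divr_gt0 // mulr_gt0.
set d := Num.min (Num.min 1 (e / 4)) (eta / (4 * K)).
have d0 : 0 < d by rewrite /d !lt_min ltr01 e4 eK.
have d1 : d <= 1 by rewrite /d !ge_min lexx.
have de : d <= e / 4 by rewrite /d !ge_min lexx orbT.
have dK : d <= eta / (4 * K) by rewrite /d ge_min lexx orbT.
have dt : `|t| * d <= eta / 4.
  have : `|t| * d <= K * (eta / (4 * K)).
    apply: ler_pM; [exact: normr_ge0 | exact: ltW | rewrite /K; lra | exact: dK].
  have -> : K * (eta / (4 * K)) = eta / 4 by field; rewrite gt_eqF.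
  by [].
set m := Num.min (e / 4) (eta / (4 * K)).
have m0 : 0 < m by rewrite /m lt_min e4 eK.
have hYc : \forall th \near pinfty_nbhs R, `|Y - Ytil n t th| < m.
  exact: (cvgrPdist_lt _ _).1 (Ytil_cvg c0 n0 hn hc (t := t)) m m0.
have e4' : 0 < eta / 4 by rewrite divr_gt0.
have hPc : \forall th \near pinfty_nbhs R, `|Lam c t - phi n t th| < eta / 4.
  exact: (cvgrPdist_lt _ _).1 (phi_cvg c0 n0 hc (t := t)) _ e4'.
have hIv : \forall th \near pinfty_nbhs R, `|0 - th^-1| < eta / 4.
  exact: (cvgrPdist_lt _ _).1 (@inv_cvg0 R) _ e4'.
have hNc : \forall th \near pinfty_nbhs R, 24 / d ^+ 2 <= ((n th)%:R : R).
  exact: (cvgryPge _).1 hn (24 / d ^+ 2).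
near=> th.
have th0 : 0 < th by near: th; exact: nbhs_pinfty_gt.
have hY1 : `|Y - Ytil n t th| < m by near: th; exact: hYc.
have hP1 : `|Lam c t - phi n t th| < eta / 4 by near: th; exact: hPc.
have hI1 : `|0 - th^-1| < eta / 4 by near: th; exact: hIv.
have hN1 : 24 / d ^+ 2 <= ((n th)%:R : R) by near: th; exact: hNc.
set N := n th.
have Np : 0 < (N%:R : R) by rewrite ltr0n; exact: n0.
have hsmall : 2 * expR (- (N%:R * d ^+ 2 / 8)) <= 1 / 2.
  set y := N%:R * d ^+ 2 / 8.
  have d2 : 0 < d ^+ 2 by rewrite exprn_gt0.
  have y3 : 3 <= y.
    move: hN1; rewrite ler_pdivrMr // => h; rewrite /y; lra.
  have ey := expR_ge1Dx y.
  have e1 : expR (- y) * expR y = 1 by rewrite mulrC expRxMexpNx_1.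
  have ep : 0 < expR (- y) := expR_gt0 _.
  nra.
have mle : m <= e / 4 by rewrite /m ge_min lexx.
have mlK : m <= eta / (4 * K) by rewrite /m ge_min lexx orbT.
have hball : forall k : nat, (k <= n th)%N ->
    `|k%:R / (n th)%:R - Ytil n t th| < d -> G (k%:R / (n th)%:R).
  move=> k kN hk; apply: he.
    rewrite /unit01 /= in_itv /=; apply/andP; split.
      by apply: divr_ge0; [exact: ler0n | exact: ltW].
    by rewrite ler_pdivrMr // mul1r ler_nat.
  have tri1 := ler_distD (Ytil n t th) (k%:R / (n th)%:R) x.
  have tri2 := ler_distD Y (Ytil n t th) x.
  rewrite distrC in hY1.
  have : `|k%:R / (n th)%:R - x| < d + m + e / 2 :> R.
    apply: le_lt_trans tri1 _.
    have : `|Ytil n t th - x| < m + e / 2 :> R.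
      apply: le_lt_trans tri2 _; rewrite ltrD //.
    move=> h2; rewrite -addrA; exact: ltrD.
  move=> h3; apply: lt_le_trans h3 _; lra.
have d01 : 0 < d <= 1 by rewrite d0 d1.
have hQ := lower_finite n0 (G := G) (t := t) (d := d) th0 d01 hball hsmall.
set P := Kn_law th (n th) G.
set z := phi n t th - t * Ytil n t th - `|t| * d.
have Q0 : 0 < 1 / 2 * expR (th * z) by rewrite mulr_gt0 ?expR_gt0 // divr_gt0.
have P0 : 0 < P by exact: lt_le_trans Q0 hQ.
rewrite /scaled_log (gt_eqF P0) lee_fin.
have hl : ln (1 / 2 * expR (th * z)) <= ln P by rewrite ler_ln ?posrE.
rewrite lnM ?posrE ?expR_gt0 ?divr_gt0 // expRK in hl.
have l2 : - 1 <= ln (1 / 2 : R).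
  rewrite mul1r lnV ?posrE // lerN2.
  have m11 : (-1 : R) < 1 by rewrite (lt_trans (ltrN10 R)) ?ltr01.
  by have := @le_ln1Dx R 1 m11.
have ti : 0 < th^-1 by rewrite invr_gt0.
have hl2 : th^-1 * (- 1 + th * z) <= th^-1 * ln P.
  apply: ler_wpM2l; [exact: ltW | lra].
rewrite mulrDr mulrA mulVf ?gt_eqF // mul1r mulrN1 in hl2.
have hi : th^-1 < eta / 4 by move: hI1; rewrite sub0r normrN gtr0_norm.
have hp : Lam c t - eta / 4 < phi n t th :> R.
  by move: hP1; rewrite ltr_norml => /andP[_ h]; lra.
have hty : t * Ytil n t th <= t * Y + eta / 4 :> R.
  have h1 : t * (Ytil n t th - Y) <= `|t| * `|Ytil n t th - Y|.
    by rewrite -normrM; exact: ler_norm.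
  have h2 : `|t| * `|Ytil n t th - Y| <= K * (eta / (4 * K)).
    apply: ler_pM; [exact: normr_ge0 | exact: normr_ge0 | rewrite /K; lra |].
    by rewrite distrC; apply: le_trans (ltW hY1) mlK.
  have eqK : K * (eta / (4 * K)) = eta / 4 by field; rewrite gt_eqF.
  rewrite eqK in h2.
  have : t * Ytil n t th = t * Y + t * (Ytil n t th - Y) by ring.
  lra.
have hs : t * Y <= t * x by rewrite -subr_ge0 -mulrBr.
rewrite /z in hl2.
lra.
Unshelve. all: end_near.
Qed.

End Main3.
Unset Implicit Arguments.

Theorem theorem4p4 (R : realType) (c : R) (n : R -> nat) :
  0 < c ->
  (forall theta, (0 < n theta)%N) ->
  (((n theta)%:R : R) @[theta --> +oo] --> +oo) ->
  (theta / (n theta)%:R @[theta --> +oo] --> (c : R)) ->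
  LDP01 (fun theta A => Kn_law theta (n theta) A) (rate3 c).
Proof.
move=> c0 n0 hn hc; split.
- move=> x _; exact: rate_ge0 c0 x.
- exact: part2.
- by move=> F _ FU; apply: part3.
- by move=> G _ GU; apply: part4.
Qed.
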